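(* Assume there exist constants $\beta>1$ and $C_1,C_2>0$ such that $C_1(\log\frac1x)^{\beta-1}dx\le\Lambda(dx)\le C_2(\log\frac1x)^{\beta-1}dx$ on $(0,1)$. Then for every $\delta\in(0,1)$, as $n\to\infty$, $$\sum_{k=\lfloor\delta n\rfloor+1}^n\binom nk\lambda_{n,k}\le\frac{C_2}{\beta}\delta^{-\beta}+O(n^{-1}).$$
   Context: $\Lambda$ is a finite measure on $[0,1]$; for $2\le k\le n$, $\lambda_{n,k}=\int_{[0,1]}x^{k-2}(1-x)^{n-k}\Lambda(dx)$. $\lfloor x\rfloor$ is the integer part of $x$. *)

(* Defs.v *)
From HB Require Import structures.
From mathcomp Require Import all_boot all_order all_algebra.
From mathcomp Require Import all_classical all_reals all_analysis.
Set Implicit Arguments. Unset Strict Implicit. Unset Printing Implicit Defensive.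
Import Order.TTheory GRing.Theory Num.Theory.
Import numFieldNormedType.Exports.
Local Open Scope classical_set_scope.
Local Open Scope ring_scope.

(* lambda_{n,k} = \int_{[0,1]} x^(k-2) (1-x)^(n-k) Lambda(dx)  (used for 2 <= k <= n) *)
Definition lam (R : realType) (Lambda : {measure set R -> \bar R}) (n k : nat) : \bar R :=
  (\int[Lambda]_(x in `[0%R, 1%R]) (x ^+ (k - 2) * (1 - x) ^+ (n - k))%:E)%E.

Definition logdens (R : realType) (beta x : R) : R := (ln (1 / x)) `^ (beta - 1).

Definition tailsum (R : realType) (Lambda : {measure set R -> \bar R}) (delta : R) (n : nat)
  : \bar R :=
  (\sum_((Num.truncn (delta * n%:R)).+1 <= k < n.+1) ('C(n, k))%:R%:E * lam Lambda n k)%E.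

(* Main.v *)
Require Import Defs.
From HB Require Import structures.
From mathcomp Require Import all_boot all_order all_algebra.
From mathcomp Require Import all_classical all_reals all_analysis.
From mathcomp Require Import ring lra measurable_realfun.
Import Order.TTheory GRing.Theory Num.Theory.
Import numFieldNormedType.Exports.
Local Open Scope classical_set_scope.
Local Open Scope ring_scope.


Section Binom.
Variable R : realType.

Definition bw (N j : nat) (x : R) : R := 'C(N, j)%:R * (x ^+ j * (1 - x) ^+ (N - j)).

Lemma bw_ge0 N j x : 0 <= x <= 1 -> 0 <= bw N j x.
Proof.
move=> /andP[x0 x1]; rewrite /bw; apply: mulr_ge0 => //.
by apply: mulr_ge0; apply: exprn_ge0; lra.
Qed.

Lemma S0 N x : \sum_(j < N.+1) bw N j x = 1.
Proof.
have := exprDn (1 - x) x N; rewrite subrK expr1n => ->.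
apply: eq_bigr => i _; rewrite /bw mulr_natl mulrC.
by [].
Qed.

Lemma S1 N x : \sum_(j < N.+1) j%:R * bw N j x = N%:R * x.
Proof.
case: N => [|M]; first by rewrite big_ord_recl big_ord0 !mul0r addr0.
rewrite big_ord_recl /= mul0r add0r.
transitivity (\sum_(i < M.+1) (M.+1)%:R * x * bw M i x); last first.
  by rewrite -big_distrr /= S0 mulr1.
apply: eq_bigr => i _; rewrite /bw /bump /= add1n subSS.
have h := mul_bin_diag M.+1 i; rewrite /= in h.
rewrite mulrA -natrM -h natrM exprS; ring.
Qed.

Lemma S2 N x : \sum_(j < N.+1) (j%:R * (j%:R - 1)) * bw N j x
  = N%:R * (N%:R - 1) * x ^+ 2.
Proof.
case: N => [|M]; first by rewrite big_ord_recl big_ord0 !mul0r addr0.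
rewrite big_ord_recl /= mul0r mul0r add0r.
transitivity (\sum_(i < M.+1) (M.+1)%:R * x * (i%:R * bw M i x)); last first.
  rewrite -big_distrr /= S1 -[in RHS]natr1; ring.
apply: eq_bigr => i _; rewrite /bw /bump /= add1n subSS.
have h := mul_bin_diag M.+1 i; rewrite /= in h.
rewrite -natr1.
have -> : (i%:R + 1 - 1 : R) = i%:R by ring.
rewrite natr1.
transitivity (i%:R * ((i.+1 * 'C(M.+1, i.+1))%:R * (x ^+ i.+1 * (1 - x) ^+ (M - i))) : R).
  rewrite natrM; ring.
by rewrite -h natrM exprS; ring.
Qed.

Lemma Var N x : \sum_(j < N.+1) (j%:R - N%:R * x) ^+ 2 * bw N j x
  = N%:R * x * (1 - x).
Proof.
transitivity (\sum_(j < N.+1) ((j%:R * (j%:R - 1)) * bw N j x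
   + (1 - 2 * N%:R * x) * (j%:R * bw N j x) + (N%:R * x) ^+ 2 * bw N j x)).
  by apply: eq_bigr => i _; ring.
rewrite !big_split /= -!big_distrr /= S0 S1 S2; ring.
Qed.


Definition gsum (n m : nat) (x : R) : R :=
  \sum_(m <= k < n.+1) 'C(n, k)%:R * (x ^+ (k - 2) * (1 - x) ^+ (n - k)).

Lemma binom_shift N j :
  ('C(N.+2, j.+2) * (j.+2 * j.+1) = N.+2 * N.+1 * 'C(N, j))%N.
Proof.
have h1 := mul_bin_diag N.+2 j.+1; have h2 := mul_bin_diag N.+1 j.
rewrite /= in h1 h2.
by rewrite -mulnA h2 [in RHS]mulnCA h1; ring.
Qed.

Lemma gsum_low N m x : (2 <= m <= N.+3)%N -> 0 <= x <= 1 ->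
  0 < m%:R - 2 - N%:R * x ->
  gsum N.+2 m x * (m%:R * (m%:R - 1) * (m%:R - 2 - N%:R * x) ^+ 2)
  <= (N.+2)%:R * (N.+1)%:R * (N%:R * x * (1 - x)).
Proof.
move=> /andP[m2 mN] /andP[x0 x1] c0.
set c := m%:R - 2 - N%:R * x.
set F := fun k : nat => 'C(N.+2, k)%:R * (x ^+ (k - 2) * (1 - x) ^+ (N.+2 - k)) : R.
have F0 k : 0 <= F k by rewrite /F; apply: mulr_ge0 => //; apply: mulr_ge0; apply: exprn_ge0; lra.
set G := fun k : nat => F k * (k%:R * (k%:R - 1) * (k%:R - 2 - N%:R * x) ^+ 2).
have G0 k : (2 <= k)%N -> 0 <= G k.
  move=> k2; rewrite /G; apply: mulr_ge0 => //; apply: mulr_ge0; last exact: sqr_ge0.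
  have : (2 <= k%:R :> R) by rewrite ler_nat.
  by move=> h; apply: mulr_ge0; lra.
rewrite /gsum -/F big_distrl /=.
apply: (@le_trans _ _ (\sum_(m <= k < N.+3) G k)).
  rewrite big_nat [X in _ <= X]big_nat; apply: ler_sum => k /andP[mk _].
  rewrite /G; apply: ler_wpM2l; first exact: F0.
  have hk : (m%:R <= k%:R :> R) by rewrite ler_nat.
  have hm : (2 <= m%:R :> R) by rewrite ler_nat.
  apply: ler_pM.
  - by apply: mulr_ge0; lra.
  - exact: sqr_ge0.
  - by apply: ler_pM; lra.
  - rewrite /c ler_sqr ?nnegrE; rewrite /c in c0; lra.
apply: (@le_trans _ _ (\sum_(2 <= k < N.+3) G k)).
  rewrite (big_cat_nat m2 mN) /= lerDr big_nat sumr_ge0 // => k /andP[k2 _].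
  exact: G0.
rewrite (big_addn 0 N.+3 2) subn2 /= big_mkord.
rewrite (eq_bigr (fun j : 'I_(N.+1) => (N.+2)%:R * (N.+1)%:R * ((j%:R - N%:R * x) ^+ 2 * bw N j x))); last first.
  move=> j _; rewrite /G /F /bw addn2 subSS subSS subn0.
  have h := binom_shift N j.
  have -> : ((j.+2)%:R - 2 - N%:R * x : R) = j%:R - N%:R * x by rewrite -!natr1; ring.
  have -> : ((j.+2)%:R * ((j.+2)%:R - 1) : R) = (j.+2 * j.+1)%:R by rewrite natrM -[in RHS]natr1; ring.
  transitivity (('C(N.+2, j.+2) * (j.+2 * j.+1))%:R * (x ^+ j * (1 - x) ^+ (N - j)) * (j%:R - N%:R * x) ^+ 2 : R).
    rewrite natrM; ring.
  rewrite h !natrM; ring.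
by rewrite -big_distrr /= Var.
Qed.

Lemma gsum_high n m x : (2 <= m)%N -> 0 < x <= 1 -> gsum n m x <= x ^-2.
Proof.
move=> m2 /andP[x0 x1].
have xn0 : x != 0 by rewrite gt_eqF.
rewrite /gsum.
apply: (@le_trans _ _ (\sum_(m <= k < n.+1) x ^-2 * bw n k x)).
  rewrite !big_nat; apply: ler_sum => k /andP[mk _].
  rewrite /bw; have k2 : (2 <= k)%N by apply: leq_trans mk.
  have -> : x ^+ k = x ^+ 2 * x ^+ (k - 2) by rewrite -exprD subnKC.
  by rewrite le_eqVlt; apply/orP; left; apply/eqP; field.
apply: (@le_trans _ _ (\sum_(0 <= k < n.+1) x ^-2 * bw n k x)).
  case: (leqP m n.+1) => mn.
    rewrite (big_cat_nat (leq0n m) mn) /= lerDr big_nat sumr_ge0 // => k _.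
    by apply: mulr_ge0; [rewrite invr_ge0 exprn_ge0 // ltW | apply: bw_ge0; rewrite ltW].
  rewrite big_geq ?(ltnW mn) // big_nat sumr_ge0 // => k _.
  by apply: mulr_ge0; [rewrite invr_ge0 exprn_ge0 // ltW | apply: bw_ge0; rewrite ltW].
by rewrite big_mkord -big_distrr /= S0 mulr1.
Qed.

End Binom.

Arguments gsum {R}.
Arguments bw {R}.

Section Pow.
Variable R : realType.

Lemma ln_ge1V (t : R) : 0 < t -> 1 - t^-1 <= ln t.
Proof.
move=> t0.
have h : -1 < t^-1 - 1.
  have : 0 < t^-1 by rewrite invr_gt0.
  lra.
have := le_ln1Dx h; rewrite addrC subrK lnV ?posrE //; lra.
Qed.

Lemma bern (t b : R) : 0 < t -> 0 <= b -> 1 + b * (1 - t^-1) <= t `^ b.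
Proof.
move=> t0 b0; rewrite /powR gt_eqF //.
apply: le_trans (expR_ge1Dx _).
rewrite lerD2l; apply: ler_wpM2l => //; exact: ln_ge1V.
Qed.

Lemma powR_invl (t b : R) : 0 <= t -> (t^-1) `^ b = (t `^ b)^-1.
Proof. by move=> t0; rewrite -powR_inv1 // -powRrM mulN1r powRN. Qed.

Lemma piece (a b q th be : R) : 0 < a -> a <= b -> b <= q * a -> 0 < be ->
  q `^ (be + 1) <= 1 + th ->
  a ^-2 * (a^-1) `^ (be - 1) * (b - a) <= (1 + th) / be * ((a^-1) `^ be - (b^-1) `^ be).
Proof.
move=> a0 ab bq be0 hq.
set t := b / a.
have t1 : 1 <= t by rewrite /t ler_pdivlMr // mul1r.
have tq : t <= q by rewrite /t ler_pdivrMr.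
have t0 : 0 < t by lra.
have t0w : 0 <= t by lra.
have be0w : 0 <= be by lra.
set P := (a^-1) `^ be.
have P0 : 0 < P by apply: powR_gt0; rewrite invr_gt0.
have ai0 : a^-1 != 0 by rewrite invr_neq0 // gt_eqF.
have e1 : (a^-1) `^ (be - 1) = P * a.
  by rewrite powRB ?ai0 ?implybT // powRr1 ?invr_ge0 ?ltW // invrK.
have e2 : (b^-1) `^ be = P * (t `^ be)^-1.
  have -> : b^-1 = a^-1 * t^-1 by rewrite /t; field; rewrite ?gt_eqF //; lra.
  have ai : 0 <= a^-1 by rewrite invr_ge0; lra.
  have ti : 0 <= t^-1 by rewrite invr_ge0.
  by rewrite powRM // (@powR_invl t be t0w).
set T := t `^ be.
have hT : 1 + be * (1 - t^-1) <= T by apply: bern.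
have T1 : 1 <= T.
  apply: le_trans hT; rewrite lerDl; apply: mulr_ge0 => //.
  by rewrite subr_ge0 invf_le1.
have tT : t * T <= 1 + th.
  apply: le_trans hq.
  have -> : t * T = t `^ (be + 1).
    have tn0 : t != 0 by rewrite gt_eqF.
    rewrite powRD; last by rewrite tn0 implybT.
    by rewrite (powRr1 t0w) mulrC.
  have hb1 : 0 <= be + 1 by lra.
  have tn : t \is Num.nneg by rewrite nnegrE.
  have qn : q \is Num.nneg by rewrite nnegrE; lra.
  exact: (ge0_ler_powR hb1 tn qn tq).
have lhs : a ^-2 * (a^-1) `^ (be - 1) * (b - a) = P * (t - 1).
  rewrite e1 /t; field; rewrite gt_eqF //.
rewrite lhs e2.
have T0 : 0 < T by lra.
have key : be * (t - 1) <= (1 + th) * (1 - T^-1).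
  have h1 : t * (T - 1) <= (1 + th) * (1 - T^-1).
    have -> : (1 + th) * (1 - T^-1) = ((1 + th) / T) * (T - 1) by field; rewrite gt_eqF.
    apply: ler_wpM2r; first lra.
    by rewrite ler_pdivlMr // mulrC.
  apply: le_trans h1.
  have : be * (1 - t^-1) <= T - 1 by lra.
  move=> h2.
  have -> : be * (t - 1) = t * (be * (1 - t^-1)) by field; rewrite gt_eqF.
  by apply: ler_wpM2l => //; rewrite ltW.
have -> : (1 + th) / be * (P - P * T^-1) = P * ((1 + th) * (1 - T^-1)) / be.
  by field; rewrite !gt_eqF.
rewrite ler_pdivlMr // -mulrA; apply: ler_wpM2l; [exact: ltW|].
by rewrite mulrC.
Qed.


Lemma pow_lin (u : R) K : 0 <= u <= 1 -> (1 + u) ^+ K <= 1 + u * (K%:R * 2 ^+ K).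
Proof.
move=> /andP[u0 u1]; elim: K => [|K IH]; first by rewrite expr0 mul0r mulr0 addr0.
rewrite exprSr.
have h2 : 0 <= 2 ^+ K :> R by apply: exprn_ge0.
have hK : 0 <= K%:R :> R by [].
apply: (@le_trans _ _ ((1 + u * (K%:R * 2 ^+ K)) * (1 + u))).
  by apply: ler_wpM2r; [lra|].
rewrite exprS -natr1.
have hp : 0 <= u * (K%:R * 2 ^+ K) by apply: mulr_ge0 => //; apply: mulr_ge0.
have : u * (u * (K%:R * 2 ^+ K)) <= u * (K%:R * 2 ^+ K).
  by rewrite -[X in _ <= X]mul1r; apply: ler_wpM2r.
have hB : 1 <= 2 ^+ K :> R by apply: exprn_ege1; lra.
have hu : u <= u * 2 ^+ K by rewrite -[X in X <= _]mulr1; apply: ler_wpM2l.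
lra.
Qed.

Lemma small_pow (p th : R) : 0 <= p -> 0 < th ->
  exists2 u : R, 0 < u & forall t : R, 1 <= t <= 1 + u -> t `^ p <= 1 + th.
Proof.
move=> p0 th0.
set K := (Num.truncn p).+1.
have pK : p <= K%:R by rewrite /K; apply: ltW; exact: truncnS_gt.
set c := K%:R * 2 ^+ K : R.
have c0 : 0 < c by rewrite /c; apply: mulr_gt0; [rewrite ltr0n | apply: exprn_gt0].
exists (Num.min 1 (th / c)).
  by rewrite lt_min ltr01 /= divr_gt0.
move=> t /andP[t1 tu].
have um1 : Num.min 1 (th / c) <= 1 by rewrite ge_min lexx.
have um2 : Num.min 1 (th / c) <= th / c by rewrite ge_min lexx orbT.
set u := Num.min 1 (th / c) in um1 um2 tu.
have u0 : 0 <= u by lra.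
apply: (@le_trans _ _ (t `^ K%:R)); first by apply: ler_powR.
rewrite powR_mulrn; last lra.
apply: (@le_trans _ _ ((1 + u) ^+ K)).
  by apply: lerXn2r; rewrite ?nnegrE //; lra.
apply: (le_trans (@pow_lin u K _)); first by rewrite u0 um1.
rewrite lerD2l -/c.
have : u * c <= th / c * c by apply: ler_wpM2r => //; lra.
by rewrite divfK // gt_eqF.
Qed.

End Pow.

Section Meas.
Variable R : realType.

Lemma logdens_meas (be : R) (D : set R) : measurable D -> D `<=` `]0, 1[ ->
  measurable_fun D (EFin \o logdens be).
Proof.
move=> mD D01.
apply/measurable_realfun.measurable_EFinP.
apply: (@eq_measurable_fun _ _ _ _ D (fun x => powR (- ln x) (be - 1))).
  move=> x; rewrite inE => /D01; rewrite /= in_itv /= => /andP[x0 _].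
  by rewrite /logdens div1r lnV // posrE.
apply: (measurable_funS (E := setT)) => //.
apply: (measurableT_comp (measurable_powR _)) => //.
apply: (measurableT_comp (@oppr_measurable R setT)) => //.

Qed.

Lemma logdens_le (be a x : R) : 1 <= be -> 0 < a <= x -> x <= 1 ->
  logdens be x <= (a^-1) `^ (be - 1).
Proof.
move=> be1 /andP[a0 ax] x1.
have x0 : 0 < x by lra.
rewrite /logdens div1r.
have h0 : 0 <= ln x^-1 by apply: ln_ge0; rewrite invf_ge1.
have h1 : ln x^-1 <= a^-1.
  have xi0 : 0 < x^-1 by rewrite invr_gt0.
  have h : -1 < x^-1 - 1 by lra.
  have := le_ln1Dx h; rewrite addrC subrK => h2.
  have : x^-1 <= a^-1 by rewrite lef_pV2 ?posrE.
  lra.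
have hb : 0 <= be - 1 by lra.
have hn : ln x^-1 \is Num.nneg by rewrite nnegrE.
have hn' : a^-1 \is Num.nneg by rewrite nnegrE invr_ge0 ltW.
exact: (ge0_ler_powR hb hn hn' h1).
Qed.


Local Open Scope ereal_scope.

Lemma leb_itv (a b : R) : (a <= b)%R ->
  lebesgue_measure (`]a, b]%classic : set R) <= (b - a)%:E.
Proof.
move=> ab; rewrite lebesgue_measure_itv /=.
case: ifP => _; first by rewrite EFinB.
by rewrite lee_fin subr_ge0.
Qed.

Lemma piece_meas (L : {measure set R -> \bar R}) (be C2 a b : R) :
  (0 <= C2)%R -> (1 <= be)%R -> (0 < a)%R -> (a <= b)%R -> (b <= 1)%R ->
  (forall A : set R, measurable A -> A `<=` `[0%R, 1%R]%classic ->
     L A <= C2%:E * \int[lebesgue_measure]_(x in A `&` `]0%R, 1%R[%classic) (logdens be x)%:E) ->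
  L `]a, b]%classic <= (C2 * ((a^-1) `^ (be - 1) * (b - a)))%:E.
Proof.
move=> C20 be1 a0 ab b1 Hup.
have mA : measurable (`]a, b]%classic : set R) by exact: measurable_itv.
have sub : `]a, b]%classic `<=` `[0%R, 1%R]%classic.
  move=> x; rewrite /= !in_itv /= => /andP[ax xb]; apply/andP; split; lra.
apply: le_trans (Hup _ mA sub) _.
rewrite EFinM; apply: lee_wpmul2l; first by rewrite lee_fin.
set D := `]a, b]%classic `&` `]0%R, 1%R[%classic.
have mD : measurable D by apply: measurableI => //; exact: measurable_itv.
apply: (@le_trans _ _ (\int[lebesgue_measure]_(x in D) (cst ((a^-1) `^ (be - 1))%:E) x)).
  apply: ge0_le_integral.
  - exact: mD.
  - by move=> x _; rewrite lee_fin; exact: powR_ge0.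
  - by apply: logdens_meas => //; exact: subIsetr.
  - exact: measurable_cst.
  - move=> x [/=]; rewrite !in_itv /= => /andP[ax xb] /andP[x0 x1].
    by rewrite lee_fin; apply: logdens_le => //; [rewrite a0 ltW | lra].
rewrite integral_cst // EFinM; apply: lee_wpmul2l; first by rewrite lee_fin powR_ge0.
have h1 : lebesgue_measure D <= lebesgue_measure (`]a, b]%classic : set R).
  apply: le_measure; [by rewrite inE | rewrite inE; exact: measurable_itv | exact: subIsetl].
apply: (le_trans h1).
rewrite lebesgue_measure_itv /=.
case: ifP => _; first by rewrite EFinB.
by rewrite lee_fin subr_ge0.
Qed.

End Meas.

Section Integ.
Variable R : realType.

Lemma poly_meas (D : set R) (c : R) i j :
  measurable_fun D (fun x : R => c * (x ^+ i * (1 - x) ^+ j)).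
Proof.
apply: measurable_funM; first exact: measurable_cst.
apply: measurable_funM; first exact: measurable_funX.
apply: measurable_funX; apply: measurable_funB => //; exact: measurable_cst.
Qed.

Lemma gsum_meas (D : set R) n m : measurable_fun D (gsum n m).
Proof.
rewrite /gsum.
elim: (index_iota m n.+1) => [|k s IH].
  rewrite (_ : (fun x => _) = cst 0); first exact: measurable_cst.
  by apply/funext => x; rewrite big_nil.
rewrite (_ : (fun x => _) = (fun x => 'C(n, k)%:R * (x ^+ (k - 2) * (1 - x) ^+ (n - k)))
   \+ (fun x => \sum_(j <- s) 'C(n, j)%:R * (x ^+ (j - 2) * (1 - x) ^+ (n - j)))).
  by apply: measurable_funD => //; exact: poly_meas.
by apply/funext => x; rewrite big_cons.
Qed.

Lemma gsum_ge0 n m (x : R) : 0 <= x <= 1 -> 0 <= gsum n m x.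
Proof.
move=> /andP[x0 x1]; rewrite /gsum; apply: sumr_ge0 => k _.
apply: mulr_ge0 => //; apply: mulr_ge0; apply: exprn_ge0; lra.
Qed.

Local Open Scope ereal_scope.

Lemma tailsum_eq (L : {measure set R -> \bar R}) (de : R) n :
  tailsum L de n = \int[L]_(x in `[0%R, 1%R]%classic) (gsum n (Num.truncn (de * n%:R)).+1 x)%:E.
Proof.
have mD : measurable (`[0%R, 1%R]%classic : set R) by exact: measurable_itv.
rewrite /tailsum /gsum.
set m := (Num.truncn (de * n%:R)).+1.
transitivity (\sum_(m <= k < n.+1) \int[L]_(x in `[0%R, 1%R]%classic)
   ('C(n, k)%:R * (x ^+ (k - 2) * (1 - x) ^+ (n - k)))%:E).
  apply: eq_bigr => k _; rewrite /lam.
  rewrite -ge0_integralZl_EFin //.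
  - move=> x; rewrite /= in_itv /= => /andP[x0 x1].
    rewrite lee_fin; apply: mulr_ge0; apply: exprn_ge0; lra.
  - apply/measurable_EFinP.
    rewrite (_ : (fun x => _) = (fun x : R => (1 * (x ^+ (k - 2) * (1 - x) ^+ (n - k)))%R)).
      exact: poly_meas.
    by apply/funext => x; rewrite mul1r.
rewrite -ge0_integral_sum //.
- by apply: eq_integral => x _; rewrite sumEFin.
- by move=> k; apply/measurable_EFinP; exact: poly_meas.
- move=> k x; rewrite /= in_itv /= => /andP[x0 x1].
  rewrite lee_fin; apply: mulr_ge0 => //; apply: mulr_ge0; apply: exprn_ge0; lra.
Qed.


Lemma int_split (L : {measure set R -> \bar R}) (dp : R) (G : R -> R) :
  (0 <= dp <= 1)%R -> (forall x, 0 <= x <= 1 -> 0 <= G x)%R -> measurable_fun setT G ->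
  \int[L]_(x in `[0%R, 1%R]%classic) (G x)%:E =
  \int[L]_(x in `[0%R, dp]%classic) (G x)%:E + \int[L]_(x in `]dp, 1%R]%classic) (G x)%:E.
Proof.
move=> /andP[d0 d1] G0 mG.
have -> : `[0%R, 1%R]%classic = `[0%R, dp]%classic `|` `]dp, 1%R]%classic.
  apply/seteqP; split => x /=; rewrite !in_itv /=.
    move=> /andP[x0 x1]; case: (leP x dp) => h; [left | right]; by rewrite /= ?in_itv /= ?x0 ?x1 ?andbT.
  by case; rewrite /= ?in_itv /= => /andP[? ?]; apply/andP; split; lra.
apply: ge0_integral_setU; try exact: measurable_itv.
- apply/measurable_EFinP; apply: measurable_funS mG => //.
- move=> x; case; rewrite /= in_itv /= => /andP[? ?]; rewrite lee_fin; apply: G0; apply/andP; split; lra.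
- rewrite /disj_set; apply/eqP/seteqP; split => x //=; rewrite !in_itv /=.
  by move=> [/andP[? ?] /andP[? ?]]; lra.
Qed.

Lemma low_part (L : {measure set R -> \bar R}) (dp B : R) (G : R -> R) :
  (0 <= dp <= 1)%R -> (0 <= B)%R -> measurable_fun setT G ->
  (forall x, 0 <= x <= dp -> 0 <= G x <= B)%R ->
  \int[L]_(x in `[0%R, dp]%classic) (G x)%:E <= B%:E * L `[0%R, 1%R]%classic.
Proof.
move=> /andP[d0 d1] B0 mG GB.
have mD : measurable (`[0%R, dp]%classic : set R) by exact: measurable_itv.
apply: (@le_trans _ _ (\int[L]_(x in `[0%R, dp]%classic) (cst B%:E) x)).
  apply: ge0_le_integral.
  - exact: mD.
  - by move=> x; rewrite /= in_itv /= => /GB /andP[? ?]; rewrite lee_fin.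
  - by apply/measurable_EFinP; apply: measurable_funS mG.
  - exact: measurable_cst.
  - by move=> x; rewrite /= in_itv /= => /GB /andP[? ?]; rewrite lee_fin.
rewrite integral_cst //; apply: lee_wpmul2l; first by rewrite lee_fin.
apply: le_measure; [by rewrite inE | rewrite inE; exact: measurable_itv | ].
move=> x; rewrite /= !in_itv /= => /andP[? ?]; apply/andP; split; lra.
Qed.

Lemma piece_int (L : {measure set R -> \bar R}) (be C2 th q a b : R) (G : R -> R) :
  (0 <= C2)%R -> (1 < be)%R -> (0 < a)%R -> (a <= b)%R -> (b <= 1)%R -> (b <= q * a)%R ->
  (q `^ (be + 1) <= 1 + th)%R ->
  measurable_fun setT G ->
  (forall x, a < x <= b -> 0 <= G x <= x^-2)%R ->
  (forall A : set R, measurable A -> A `<=` `[0%R, 1%R]%classic ->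
     L A <= C2%:E * \int[lebesgue_measure]_(x in A `&` `]0%R, 1%R[%classic) (logdens be x)%:E) ->
  \int[L]_(x in `]a, b]%classic) (G x)%:E <=
    (C2 * ((1 + th) / be * ((a^-1) `^ be - (b^-1) `^ be)))%:E.
Proof.
move=> C20 be1 a0 ab b1 bq hq mG Gb Hup.
have mD : measurable (`]a, b]%classic : set R) by exact: measurable_itv.
apply: (@le_trans _ _ (\int[L]_(x in `]a, b]%classic) (cst (a ^-2)%:E) x)).
  apply: ge0_le_integral.
  - exact: mD.
  - by move=> x; rewrite /= in_itv /= => /Gb /andP[? ?]; rewrite lee_fin.
  - by apply/measurable_EFinP; apply: measurable_funS mG.
  - exact: measurable_cst.
  - move=> x; rewrite /= in_itv /= => hx; have /andP[_ h] := Gb _ hx.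
    rewrite lee_fin; apply: (le_trans h).
    move: hx => /andP[ax _].
    rewrite lef_pV2 ?posrE ?exprn_gt0 //; last lra.
    by rewrite lerXn2r ?nnegrE; lra.
rewrite integral_cst //.
have a2 : (0 <= a ^-2)%R by rewrite invr_ge0 exprn_ge0 // ltW.
apply: le_trans; first by apply: lee_wpmul2l; [rewrite lee_fin | apply: (@piece_meas R L be C2 a b C20 _ a0 ab b1 Hup); lra].
rewrite -EFinM lee_fin.
have := @piece R a b q th be a0 ab bq (lt_trans ltr01 be1) hq.
move=> h.
have -> : (a ^-2 * (C2 * ((a^-1) `^ (be - 1) * (b - a))) = C2 * (a ^-2 * (a^-1) `^ (be - 1) * (b - a)))%R by ring.
by apply: ler_wpM2l.
Qed.

Lemma high_part (L : {measure set R -> \bar R}) (be C2 th dp : R) (M : nat) (G : R -> R) :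
  (0 <= C2)%R -> (1 < be)%R -> (0 < dp < 1)%R -> (0 < M)%N ->
  measurable_fun setT G ->
  (forall x, dp < x <= 1 -> 0 <= G x <= x^-2)%R ->
  ((1 + (1 - dp) / M%:R / dp) `^ (be + 1) <= 1 + th)%R ->
  (forall A : set R, measurable A -> A `<=` `[0%R, 1%R]%classic ->
     L A <= C2%:E * \int[lebesgue_measure]_(x in A `&` `]0%R, 1%R[%classic) (logdens be x)%:E) ->
  \int[L]_(x in `]dp, 1%R]%classic) (G x)%:E <=
    (C2 * ((1 + th) / be * ((dp^-1) `^ be - 1)))%:E.
Proof.
move=> C20 be1 /andP[d0 d1] M0 mG Gb hq Hup.
set s := ((1 - dp) / M%:R)%R.
have Mr : (0 < M%:R :> R)%R by rewrite ltr0n.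
have s0 : (0 < s)%R by rewrite /s divr_gt0 //; lra.
set a := fun i : nat => (dp + i%:R * s)%R.
have aM : a M = 1%R by rewrite /a /s; field; rewrite gt_eqF.
have age i : (dp <= a i)%R by rewrite /a lerDl mulr_ge0 // ltW.
have ale i : (i <= M)%N -> (a i <= 1)%R.
  move=> iM; rewrite -aM /a lerD2l; apply: ler_wpM2r; [exact: ltW | by rewrite ler_nat].
suff H : forall i, (i <= M)%N -> \int[L]_(x in `]dp, a i]%classic) (G x)%:E <=
    (C2 * ((1 + th) / be * ((dp^-1) `^ be - ((a i)^-1) `^ be)))%:E.
  by have := H M (leqnn M); rewrite aM invr1 powR1.
elim => [|j IH] iM.
  have -> : `]dp, a 0%N]%classic = set0 :> set R.
    apply/seteqP; split => x //=; rewrite /a mul0r addr0 in_itv /= => /andP[? ?]; lra.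
  by rewrite integral_set0 /a mul0r addr0 subrr !mulr0.
have IH' := IH (ltnW iM).
have ai0 : (0 < a j)%R by have := age j; lra.
have asp : a j.+1 = (a j + s)%R by rewrite /a -natr1; ring.
have -> : `]dp, a j.+1]%classic = `]dp, a j]%classic `|` `]a j, a j.+1]%classic :> set R.
  apply/seteqP; split => x /=; rewrite !in_itv /=.
    move=> /andP[x0 x1]; case: (leP x (a j)) => h; [left | right];
      by rewrite /= ?in_itv /= ?x0 ?x1 ?andbT.
  have := age j.
  by move=> agj; case; rewrite /= ?in_itv /= => /andP[? ?]; apply/andP; split; lra.
rewrite ge0_integral_setU; try exact: measurable_itv.
- have hp : \int[L]_(x in `]a j, a j.+1]%classic) (G x)%:E <=
      (C2 * ((1 + th) / be * (((a j)^-1) `^ be - ((a j.+1)^-1) `^ be)))%:E.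
    apply: (@piece_int L be C2 th (1 + (1 - dp) / M%:R / dp) _ _ G) => //.
    - by rewrite asp lerDl ltW.
    - exact: ale.
    - rewrite asp mulrDl mul1r lerD2l -/s.
      rewrite mulrAC ler_pdivlMr //; apply: ler_wpM2l; [exact: ltW | exact: age].
    - move=> x /andP[ax xb]; apply: Gb; apply/andP; split.
        by have := age j; lra.
      by have := ale _ iM; lra.
  apply: le_trans (leeD IH' hp) _.
  rewrite -EFinD lee_fin le_eqVlt; apply/orP; left; apply/eqP; ring.
- by apply/measurable_EFinP; apply: measurable_funS mG.
- move=> x hx.
  have hx' : (dp < x <= 1)%R.
    have := age j; have := ale _ iM.
    by case: hx; rewrite /= in_itv /= => /andP[? ?] ? ?; apply/andP; split; lra.
  by have /andP[? _] := Gb _ hx'; rewrite lee_fin.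
- rewrite /disj_set; apply/eqP/seteqP; split => x //=; rewrite !in_itv /=.
  by move=> [/andP[? ?] /andP[? ?]]; lra.
Qed.

End Integ.


Lemma low_bound (R : realType) (g Q P de ep n : R) : 0 <= g -> g * Q <= P -> P <= n ^+ 3 ->
  de ^+ 2 * ep ^+ 2 * n ^+ 4 / 8 <= Q -> 0 < de -> 0 < ep -> 0 < n ->
  g <= 8 / (de ^+ 2 * ep ^+ 2 * n).
Proof.
move=> g0 gQ Pn KQ de0 ep0 n0.
set K := de ^+ 2 * ep ^+ 2 * n ^+ 4 / 8.
have K0 : 0 < K by rewrite /K; apply: divr_gt0 => //; apply: mulr_gt0; [apply: mulr_gt0|]; apply: exprn_gt0.
have h : g * K <= n ^+ 3.
  apply: le_trans Pn; apply: le_trans gQ; exact: ler_wpM2l.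
have -> : 8 / (de ^+ 2 * ep ^+ 2 * n) = n ^+ 3 / K.
  by rewrite /K; field; rewrite ?(gt_eqF n0) ?(gt_eqF ep0) ?(gt_eqF de0).
by rewrite ler_pdivlMr.
Qed.

Lemma low_bound2 (R : realType) (de dp n x mr : R) :
  0 < dp -> dp < de -> 0 <= x <= dp -> 2 <= n -> de * n < mr ->
  2 <= de * n -> 4 <= (de - dp) * n ->
  (de - dp) * n / 2 <= mr - 2 - (n - 2) * x /\
  de ^+ 2 * (de - dp) ^+ 2 * n ^+ 4 / 8 <= mr * (mr - 1) * (mr - 2 - (n - 2) * x) ^+ 2.
Proof.
move=> dp0 dpde /andP[x0 xd] n2 dm dn2 en4.
have hc : (de - dp) * n / 2 <= mr - 2 - (n - 2) * x.
  have : (n - 2) * x <= n * dp.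
    apply: (@le_trans _ _ (n * x)); first by rewrite ler_wpM2r //; lra.
    by rewrite ler_wpM2l //; lra.
  lra.
split => //.
have c0 : 0 <= (de - dp) * n / 2 by lra.
have hc2 : ((de - dp) * n / 2) ^+ 2 <= (mr - 2 - (n - 2) * x) ^+ 2.
  rewrite !expr2; apply: ler_pM; lra.
have hm : (de * n) * (de * n / 2) <= mr * (mr - 1).
  apply: ler_pM; lra.
have -> : de ^+ 2 * (de - dp) ^+ 2 * n ^+ 4 / 8 = (de * n) * (de * n / 2) * ((de - dp) * n / 2) ^+ 2.
  by field.
apply: ler_pM => //.
- apply: mulr_ge0; lra.
- exact: sqr_ge0.
Qed.

Lemma P_le (R : realType) (n x : R) : 2 <= n -> 0 <= x <= 1 ->
  n * (n - 1) * ((n - 2) * x * (1 - x)) <= n ^+ 3.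
Proof.
move=> n2 /andP[x0 x1].
have h1 : 0 <= x * (1 - x) <= 1 by apply/andP; split; nra.
have h2 : (n - 2) * x * (1 - x) <= n.
  rewrite -mulrA; apply: (@le_trans _ _ ((n - 2) * 1)); last lra.
  by apply: ler_wpM2l; [lra | case/andP: h1].
have h3 : 0 <= (n - 2) * x * (1 - x) by rewrite -mulrA; apply: mulr_ge0; [lra | case/andP: h1].
have -> : n ^+ 3 = (n * n) * n by rewrite !exprS expr0 mulr1 mulrA.
apply: ler_pM => //.
- apply: mulr_ge0; lra.
- apply: ler_pM; lra.
Qed.

Lemma params (R : realType) (beta de : R) : 1 < beta -> 0 < de < 1 ->
  exists th dp : R, exists M : nat,
   [/\ 0 < th, 0 < dp < de, (0 < M)%N,
       (1 + (1 - dp) / M%:R / dp) `^ (beta + 1) <= 1 + th &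
       (1 + th) * ((dp^-1) `^ beta - 1) <= de `^ (- beta)].
Proof.
move=> be1 /andP[de0 de1].
set D := de `^ (- beta).
have deV1 : 1 <= de^-1 by rewrite invf_ge1 // ltW.
have eD : D = (de^-1) `^ beta by rewrite /D powRN powR_invl // ltW.
have D1 : 1 <= D.
  rewrite eD -(powRr0 (de^-1)); apply: ler_powR => //; lra.
set th := (2 * D)^-1.
have th0 : 0 < th by rewrite /th invr_gt0; lra.
have thD : th * D = 2^-1 by rewrite /th; field; rewrite gt_eqF //; lra.
have [u1 u10 hu1] := @small_pow R beta th ltac:(lra) th0.
set dp := de / (1 + u1).
have dp0 : 0 < dp by rewrite /dp divr_gt0 //; lra.
have dpde : dp < de by rewrite /dp ltr_pdivrMr; [nra | lra].
have dp1 : dp < 1 by lra.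
have hdp : (dp^-1) `^ beta <= D + 2^-1.
  have -> : dp^-1 = (1 + u1) * de^-1 by rewrite /dp invfM invrK mulrC.
  rewrite powRM; [|lra|by rewrite invr_ge0 ltW].
  rewrite -eD -thD.
  have : (1 + u1) `^ beta <= 1 + th by apply: hu1; apply/andP; split; lra.
  have : 0 <= D by lra.
  nra.
have [u2 u20 hu2] := @small_pow R (beta + 1) th ltac:(lra) th0.
set M := (Num.truncn ((1 - dp) / (u2 * dp))).+1.
have Mr : 0 < M%:R :> R by rewrite ltr0n.
have hM : (1 - dp) / (u2 * dp) < M%:R by exact: truncnS_gt.
exists th, dp, M; split => //; first by apply/andP.
  apply: hu2; apply/andP; split.
    rewrite lerDl; apply: divr_ge0; last lra.
    by apply: divr_ge0; lra.
  rewrite lerD2l -mulrA -invfM ler_pdivrMr; last by apply: mulr_gt0.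
  move: hM; rewrite ltr_pdivrMr; last by apply: mulr_gt0.
  move=> h; apply: ltW; apply: (lt_le_trans h).
  rewrite le_eqVlt; apply/orP; left; apply/eqP; ring.
have : 0 <= th * 2^-1 by apply: mulr_ge0; lra.
nra.
Qed.

Lemma nfacts (R : realType) (de ep N n : R) : 0 < de < 1 -> 0 < ep <= 1 ->
  4 / (de * ep) < N -> N <= n ->
  [/\ 2 <= de * n, 4 <= ep * n, 2 <= n & de * n <= n].
Proof.
move=> /andP[de0 de1] /andP[ep0 ep1] hN nN.
have dep : 0 < de * ep by apply: mulr_gt0.
have den : 4 < de * ep * n.
  by rewrite -ltr_pdivrMl // mulrC; apply: (lt_le_trans hN).
have n0 : 0 <= n.
  apply: (le_trans _ nN); apply: ltW; apply: (le_lt_trans _ hN).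
  by apply: divr_ge0; [lra | exact: ltW].
have dn4 : de * ep * n <= de * n.
  rewrite mulrAC; apply: ler_piMr; [apply: mulr_ge0 => //; lra | lra].
have en4 : de * ep * n <= ep * n.
  rewrite (mulrC de) -mulrA; apply: ler_wpM2l; first lra.
  apply: ler_piMl => //; lra.
have dnn : de * n <= n by apply: ler_piMl => //; lra.
split; lra.
Qed.

Lemma low_pt (R : realType) (de dp : R) (n m : nat) (x : R) :
  0 < dp -> dp < de -> de < 1 -> 0 <= x <= dp -> 2 <= n%:R :> R -> de * n%:R < m%:R ->
  (2 <= m)%N -> (m <= n.+1)%N -> 2 <= de * n%:R -> 4 <= (de - dp) * n%:R ->
  gsum n m x <= 8 / (de ^+ 2 * (de - dp) ^+ 2 * n%:R).
Proof.
move=> dp0 dpde de1 xb n2r dm m2 mn dn2 en4'.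
have n2 : (2 <= n)%N by rewrite -(ler_nat R).
have G01 : 0 <= gsum n m x by apply: gsum_ge0; case/andP: xb => ? ?; apply/andP; split; lra.
have [hc hQ] := @low_bound2 R de dp n%:R x m%:R dp0 dpde xb n2r dm dn2 en4'.
have [k ek] : exists k, n = k.+2 by exists (n - 2)%N; rewrite -addn2 subnK.
have ekr : (n%:R - 2 = k%:R :> R) by rewrite ek -addn2 natrD addrK.
have ekr1 : (n%:R - 1 = (k.+1)%:R :> R) by rewrite ek -!natr1; ring.
rewrite ekr in hc hQ.
have c0 : 0 < m%:R - 2 - k%:R * x.
  apply: (lt_le_trans _ hc); apply: divr_gt0; last lra.
  by apply: mulr_gt0; lra.
have mk : (2 <= m <= k.+3)%N by rewrite m2 -ek.
have x01 : 0 <= x <= 1 by case/andP: xb => ? ?; apply/andP; split; lra.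
have gl := @gsum_low R k m x mk x01 c0.
rewrite -ek in gl.
apply: (@low_bound R _ (m%:R * (m%:R - 1) * (m%:R - 2 - k%:R * x) ^+ 2) (n%:R * (k.+1)%:R * (k%:R * x * (1 - x))) de (de - dp) n%:R) => //.
- by rewrite -ekr -ekr1; apply: P_le.
- lra.
- lra.
- lra.
Qed.

Theorem proposition3p7 (R : realType) (Lambda : {measure set R -> \bar R})
  (beta C1 C2 : R) :
  Lambda (~` `[0%R, 1%R]%classic) = 0%E ->
  (Lambda `[0%R, 1%R]%classic < +oo)%E ->
  1 < beta -> 0 < C1 -> 0 < C2 ->
  (forall A : set R, measurable A -> A `<=` `[0%R, 1%R]%classic ->
     (C1%:E * \int[lebesgue_measure]_(x in A `&` `]0%R, 1%R[%classic) (logdens beta x)%:E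
        <= Lambda A)%E /\
     (Lambda A <=
        C2%:E * \int[lebesgue_measure]_(x in A `&` `]0%R, 1%R[%classic) (logdens beta x)%:E)%E) ->
  forall delta : R, 0 < delta < 1 ->
  exists C : R, exists N : nat, forall n : nat, (N <= n)%N ->
    (tailsum Lambda delta n <= (C2 / beta * delta `^ (- beta) + C / n%:R)%:E)%E.
Proof.
move=> _ Lfin be1 _ C20 Hdens de deb.
have Hup : forall A : set R, measurable A -> A `<=` `[0%R, 1%R]%classic ->
   (Lambda A <= C2%:E * \int[lebesgue_measure]_(x in A `&` `]0%R, 1%R[%classic) (logdens beta x)%:E)%E.
  by move=> A mA sA; case: (Hdens A mA sA).
clear Hdens.
have [th [dp [M [th0 /andP[dp0 dpde] M0 hq hfin]]]] := @params R beta de be1 deb.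
case/andP: deb => de0 de1.
set ep := de - dp.
have epb : 0 < ep <= 1 by rewrite /ep; apply/andP; split; lra.
have L0 : (0 <= Lambda `[0%R, 1%R]%classic)%E by exact: measure_ge0.
set Lr := fine (Lambda `[0%R, 1%R]%classic).
have eL : Lambda `[0%R, 1%R]%classic = Lr%:E by rewrite /Lr fineK // ge0_fin_numE.
have Lr0 : 0 <= Lr by rewrite /Lr fine_ge0.
set C := 8 * Lr / (de ^+ 2 * ep ^+ 2).
set N := (Num.truncn (4 / (de * ep))).+1.
exists C, N => n Nn.
have hN : 4 / (de * ep) < N%:R by exact: truncnS_gt.
have nN : (N%:R <= n%:R :> R) by rewrite ler_nat.
have [dn2 en4 n2r dnn] := @nfacts R de ep N%:R n%:R (ltac:(apply/andP; split => //)) epb hN nN.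
set m := (Num.truncn (de * n%:R)).+1.
have dm : de * n%:R < m%:R by exact: truncnS_gt.
have m2 : (2 <= m)%N by rewrite ltnS truncn_gt0; lra.
have mn : (m <= n.+1)%N by rewrite ltnS truncn_le_nat -natr1; lra.
rewrite tailsum_eq -/m.
have Gmeas : measurable_fun setT (gsum n m : R -> R) by exact: (@gsum_meas R setT n m).
have G01 : forall x : R, 0 <= x <= 1 -> 0 <= gsum n m x by move=> x; exact: gsum_ge0.
have dpb : 0 <= dp <= 1 by apply/andP; split; lra.
rewrite (@int_split R Lambda dp (gsum n m)) //.
set B := 8 / (de ^+ 2 * ep ^+ 2 * n%:R).
have B0 : 0 <= B by rewrite /B; apply: divr_ge0 => //; apply: mulr_ge0 => //; apply: mulr_ge0; apply: exprn_ge0; lra.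
have lowb : (\int[Lambda]_(x in `[0%R, dp]%classic) (gsum n m x)%:E <= B%:E * Lambda `[0%R, 1%R]%classic)%E.
  apply: low_part => //.
  move=> x xb; apply/andP; split.
    by apply: G01; case/andP: xb => ? ?; apply/andP; split; lra.
  exact: (@low_pt R de dp n m x dp0 dpde de1 xb n2r dm m2 mn dn2 en4).
have highb := @high_part R Lambda beta C2 th dp M (gsum n m) (ltW C20) be1
  (ltac:(apply/andP; split; lra)) M0 Gmeas.
have highb' := highb (fun x hx => ltac:(
  case/andP: hx => hx1 hx2; apply/andP; split;
    [apply: G01; apply/andP; split; lra | apply: gsum_high => //; apply/andP; split; lra])) hq Hup.
apply: (le_trans (leeD lowb highb')).
rewrite eL -EFinM -EFinD lee_fin.
have e1 : B * Lr = C / n%:R.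
  rewrite /B /C; field; rewrite ?gt_eqF //; lra.
have e2 : C2 * ((1 + th) / beta * ((dp^-1) `^ beta - 1)) <= C2 / beta * de `^ (- beta).
  have -> : C2 * ((1 + th) / beta * ((dp^-1) `^ beta - 1)) = C2 / beta * ((1 + th) * ((dp^-1) `^ beta - 1)).
    by field; rewrite gt_eqF //; lra.
  apply: ler_wpM2l => //; apply: divr_ge0; lra.
rewrite e1; lra.
Qed.
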